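(* The forgetful functor $V\colon \mathbf{Contr}\to\mathbf{Coll}_n$, which sends a collection equipped with a contraction to its underlying collection, is monadic.
   Context: Fix $n\in\mathbb{N}$. An $n$-globular set $X$ consists of sets $X_0,\dots,X_n$ and functions $s,t\colon X_m\to X_{m-1}$ ($1\le m\le n$) with $s\circ s=s\circ t$ and $t\circ s=t\circ t$; a map of $n$-globular sets is a family of functions commuting with $s$ and $t$. $\mathbf{GSet}_n$ is the resulting category (a presheaf category). Two $m$-cells are parallel if they have the same source and the same target (all $0$-cells are parallel). $T$ denotes the free strict $n$-category monad on $\mathbf{GSet}_n$, with unit $\eta^T$ and multiplication $\mu^T$. $1$ denotes the terminal $n$-globular set and $!$ any map to $1$; $T1$ is the free strict $n$-category on $1$ (its $m$-cells are the $m$-dimensional globular pasting diagrams); $\mathrm{id}_\alpha$ denotes the identity cell on a cell $\alpha$ of a strict $n$-category. An $n$-globular collection is a map $k\colon K\to T1$ in $\mathbf{GSet}_n$; a map of collections is a map over $T1$; $\mathbf{Coll}_n=\mathbf{GSet}_n/T1$. Contractions: for a collection $k\colon K\to T1$ and $x\in(T1)_m$ put $K(x)=\{a\in K_m: k(a)=x\}$. For $1\le m\le n$ and $\pi\in(T1)_m$ let $C_K(\pi)=K(s\pi)\times K(t\pi)$ if $m=1$, and $C_K(\pi)=\{(a,b)\in K(s\pi)\times K(t\pi): s(a)=s(b),\ t(a)=t(b)\}$ if $m>1$. A contraction $\gamma$ on $K$ consists of, for each $1\le m\le n$ and each $\alpha\in(T1)_{m-1}$, a function $\gamma_{\mathrm{id}_\alpha}\colon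 C_K(\mathrm{id}_\alpha)\to K(\mathrm{id}_\alpha)$ with $s\gamma_{\mathrm{id}_\alpha}(a,b)=a$ and $t\gamma_{\mathrm{id}_\alpha}(a,b)=b$, such that moreover (tameness) any two parallel $n$-cells $a,b$ of $K$ with $k(a)=k(b)$ are equal. $\mathbf{Contr}$ is the category whose objects are collections equipped with a contraction and whose morphisms $u\colon (K,\gamma)\to(K',\gamma')$ are maps of collections with $u(\gamma_{\mathrm{id}_\alpha}(a,b))=\gamma'_{\mathrm{id}_\alpha}(u(a),u(b))$ for all $\alpha$ and all $(a,b)\in C_K(\mathrm{id}_\alpha)$. *)

(* Defs.v *)
From Stdlib Require Import List FunctionalExtensionality ProofIrrelevance.
Set Implicit Arguments.
Unset Strict Implicit.

Record Category := {
  Ob :> Type;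
  Hom : Ob -> Ob -> Type;
  idm : forall a, Hom a a;
  comp : forall a b c, Hom b c -> Hom a b -> Hom a c;
  comp_id_l : forall a b (f : Hom a b), comp (idm b) f = f;
  comp_id_r : forall a b (f : Hom a b), comp f (idm a) = f;
  comp_assoc : forall a b c d (f : Hom a b) (g : Hom b c) (h : Hom c d),
      comp h (comp g f) = comp (comp h g) f }.
Arguments Hom : clear implicits.
Arguments idm {C} a : rename.
Arguments comp {C a b c} g f : rename.

Record Functor (C D : Category) := {
  fobj :> C -> D;
  fmap : forall a b : C, Hom C a b -> Hom D (fobj a) (fobj b);
  fmap_id : forall a, fmap (idm a) = idm (fobj a);
  fmap_comp : forall (a b c : C) (f : Hom C a b) (g : Hom C b c),
      fmap (comp g f) = comp (fmap g) (fmap f) }.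
Arguments fmap {C D} F {a b} f : rename.

(* U : D -> C is monadic: it has a left adjoint F (unit eta, counit eps),
   and the Eilenberg-Moore comparison functor D -> C^{UF}
   (A |-> (U A, U eps_A)) is an equivalence of categories, written out as
   "fully faithful and essentially surjective". *)
Definition monadic (D C : Category) (U : Functor D C) : Prop :=
  exists (F : Functor C D)
         (eta : forall X : C, Hom C X (U (F X)))
         (eps : forall A : D, Hom D (F (U A)) A),
    (forall X Y (f : Hom C X Y),
        comp (fmap U (fmap F f)) (eta X) = comp (eta Y) f) /\
    (forall A B (g : Hom D A B),
        comp g (eps A) = comp (eps B) (fmap F (fmap U g))) /\
    (forall X, comp (eps (F X)) (fmap F (eta X)) = idm (F X)) /\
    (forall A, comp (fmap U (eps A)) (eta (U A)) = idm (U A)) /\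
    (forall A B (f : Hom C (U A) (U B)),
        comp f (fmap U (eps A)) = comp (fmap U (eps B)) (fmap U (fmap F f)) ->
        exists! g : Hom D A B, fmap U g = f) /\
    (forall (X : C) (h : Hom C (U (F X)) X),
        comp h (eta X) = idm X ->
        comp h (fmap U (fmap F h)) = comp h (fmap U (eps (F X))) ->
        exists (A : D) (phi : Hom C (U A) X) (psi : Hom C X (U A)),
          comp phi psi = idm X /\ comp psi phi = idm (U A) /\
          comp phi (fmap U (eps A)) = comp h (fmap U (fmap F phi))).

(* m-dimensional globular pasting diagrams: a 0-pd is unique, an
   (m+1)-pd is a finite list of m-pds (Batanin trees). *)
Fixpoint pd (m : nat) : Type :=
  match m with 0 => unit | S m' => list (pd m') end.

(* source = target of an (m+1)-pd *)
Fixpoint pd_bd (m : nat) : pd (S m) -> pd m :=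
  match m return pd (S m) -> pd m with
  | 0 => fun _ => tt
  | S m' => fun l => map (@pd_bd m') l
  end.

Fixpoint pd_id (m : nat) : pd m -> pd (S m) :=
  match m return pd m -> pd (S m) with
  | 0 => fun _ => nil
  | S m' => fun l => map (@pd_id m') l
  end.

Record gset (n : nat) := GSet {
  cell : nat -> Type;
  src : forall m, cell (S m) -> cell m;
  tgt : forall m, cell (S m) -> cell m;
  glob_ss : forall m (x : cell (S (S m))), src (src x) = src (tgt x);
  glob_ts : forall m (x : cell (S (S m))), tgt (src x) = tgt (tgt x);
  trunc : forall m, n < m -> cell m -> False }.
Arguments src {n} g {m} _.
Arguments tgt {n} g {m} _.

Definition par n (X : gset n) (m : nat) : cell X m -> cell X m -> Prop :=
  match m return cell X m -> cell X m -> Prop with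
  | 0 => fun _ _ => True
  | S m' => fun a b => src X a = src X b /\ tgt X a = tgt X b
  end.
Arguments par {n} X m.

Record coll (n : nat) := Coll {
  carrier : gset n;
  arity : forall m, cell carrier m -> pd m;
  arity_src : forall m (x : cell carrier (S m)),
      arity (src carrier x) = pd_bd (arity x);
  arity_tgt : forall m (x : cell carrier (S m)),
      arity (tgt carrier x) = pd_bd (arity x) }.
Arguments arity {n} c {m} _.

Record cmap n (K K' : coll n) := CMap {
  cm : forall m, cell (carrier K) m -> cell (carrier K') m;
  cm_src : forall m (x : cell (carrier K) (S m)),
      cm (src _ x) = src _ (cm x);
  cm_tgt : forall m (x : cell (carrier K) (S m)),
      cm (tgt _ x) = tgt _ (cm x);
  cm_ar : forall m (x : cell (carrier K) m), arity K' (cm x) = arity K x }.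
Arguments cm {n K K'} c {m} _.

Lemma cmap_eq n (K K' : coll n) (f g : cmap K K') :
  @cm n K K' f = @cm n K K' g -> f = g.
Proof.
  destruct f as [f1 f2 f3 f4], g as [g1 g2 g3 g4]; simpl; intros E.
  subst. f_equal; apply proof_irrelevance.
Qed.

Definition cmap_id n (K : coll n) : cmap K K.
Proof.
  refine (@CMap n K K (fun m x => x) _ _ _); reflexivity.
Defined.

Definition cmap_comp n (K1 K2 K3 : coll n) (g : cmap K2 K3) (f : cmap K1 K2)
  : cmap K1 K3.
Proof.
  refine (@CMap n K1 K3 (fun m x => cm g (cm f x)) _ _ _); intros.
  - rewrite cm_src, cm_src; reflexivity.
  - rewrite cm_tgt, cm_tgt; reflexivity.
  - rewrite cm_ar, cm_ar; reflexivity.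
Defined.

Definition Coll_cat (n : nat) : Category.
Proof.
  refine (@Build_Category (coll n) (@cmap n) (@cmap_id n) (@cmap_comp n)
            _ _ _); intros; apply cmap_eq; reflexivity.
Defined.

(* For m+1 <= n and alpha in (T1)_m, gam m alpha is defined on
   C_K(id_alpha) = {(a,b) in K(alpha) x K(alpha) | a, b parallel}
   (for m = 0 all 0-cells are parallel, so this is K(alpha) x K(alpha)). *)
Record contraction n (K : coll n) := Contraction {
  gam : forall m (al : pd m), S m <= n ->
        forall a b : cell (carrier K) m,
        arity K a = al -> arity K b = al -> par (carrier K) m a b ->
        cell (carrier K) (S m);
  gam_ar : forall m al h a b ha hb hab,
      arity K (@gam m al h a b ha hb hab) = pd_id al;
  gam_src : forall m al h a b ha hb hab,
      src (carrier K) (@gam m al h a b ha hb hab) = a;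
  gam_tgt : forall m al h a b ha hb hab,
      tgt (carrier K) (@gam m al h a b ha hb hab) = b;
  tame : forall a b : cell (carrier K) n,
      par (carrier K) n a b -> arity K a = arity K b -> a = b }.

Record contr (n : nat) := Contr {
  ccoll : coll n;
  ccon : contraction ccoll }.

Record contr_map n (A B : contr n) := ContrMap {
  ucm : cmap (ccoll A) (ccoll B);
  ucm_gam : forall m al h a b ha hb hab ha' hb' hab',
      cm ucm (@gam _ _ (ccon A) m al h a b ha hb hab)
      = @gam _ _ (ccon B) m al h (cm ucm a) (cm ucm b) ha' hb' hab' }.

Lemma contr_map_eq n (A B : contr n) (f g : contr_map A B) :
  ucm f = ucm g -> f = g.
Proof.
  destruct f as [f1 f2], g as [g1 g2]; simpl; intros E; subst.
  f_equal; apply proof_irrelevance.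
Qed.

Definition contr_map_id n (A : contr n) : contr_map A A.
Proof.
  refine (@ContrMap n A A (cmap_id _) _); intros; simpl.
  f_equal; apply proof_irrelevance.
Defined.

Definition contr_map_comp n (A B C : contr n) (g : contr_map B C)
  (f : contr_map A B) : contr_map A C.
Proof.
  refine (@ContrMap n A C (cmap_comp (ucm g) (ucm f)) _); intros; simpl.
  assert (ha1 : arity (ccoll B) (cm (ucm f) a) = al)
    by (rewrite cm_ar; exact ha).
  assert (hb1 : arity (ccoll B) (cm (ucm f) b) = al)
    by (rewrite cm_ar; exact hb).
  assert (hab1 : par (carrier (ccoll B)) m (cm (ucm f) a) (cm (ucm f) b)).
  { destruct m; simpl in *; [exact I|].
    destruct hab as [E1 E2]. rewrite <- !cm_src, <- !cm_tgt, E1, E2.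
    split; reflexivity. }
  rewrite (@ucm_gam _ _ _ f m al h a b ha hb hab ha1 hb1 hab1).
  apply ucm_gam.
Defined.

Definition Contr_cat (n : nat) : Category.
Proof.
  refine (@Build_Category (contr n) (@contr_map n) (@contr_map_id n)
            (@contr_map_comp n) _ _ _); intros; apply contr_map_eq;
    apply cmap_eq; reflexivity.
Defined.

Definition V (n : nat) : Functor (Contr_cat n) (Coll_cat n).
Proof.
  refine (@Build_Functor (Contr_cat n) (Coll_cat n) (@ccoll n)
            (fun A B f => ucm f) _ _); intros; reflexivity.
Defined.

(* Main.v *)
Require Import Defs.
From Stdlib Require Import List FunctionalExtensionality ProofIrrelevance
  PropExtensionality ClassicalEpsilon Lia Program.Equality.

Lemma sig_eq {A : Type} {P : A -> Prop} (x y : sig P) :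
  proj1_sig x = proj1_sig y -> x = y.
Proof. destruct x, y; simpl; intros; subst; f_equal; apply proof_irrelevance. Qed.

Section Quot.
Variable T : Type.
Variable R : T -> T -> Prop.
Hypothesis Rrefl : forall x, R x x.
Hypothesis Rsym : forall x y, R x y -> R y x.
Hypothesis Rtrans : forall x y z, R x y -> R y z -> R x z.

Definition Q := {P : T -> Prop | exists t, P = R t}.
Definition cls (t : T) : Q := exist _ (R t) (ex_intro _ t eq_refl).
Definition rep (q : Q) : T :=
  proj1_sig (constructive_indefinite_description _ (proj2_sig q)).
Lemma cls_rep q : cls (rep q) = q.
Proof.
  unfold rep, cls. destruct q as [P HP]; simpl.
  destruct (constructive_indefinite_description _ HP) as [t Ht]; simpl.
  subst. f_equal. apply proof_irrelevance.
Qed.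
Lemma cls_surj q : exists t, q = cls t.
Proof. exists (rep q). symmetry; apply cls_rep. Qed.
Lemma cls_eq_R t u : cls t = cls u -> R t u.
Proof.
  intros H. unfold cls in H. apply (f_equal (@proj1_sig _ _)) in H. simpl in H.
  assert (R u u) by apply Rrefl. rewrite <- H in H0. exact H0.
Qed.
Lemma R_cls_eq t u : R t u -> cls t = cls u.
Proof.
  intros H. unfold cls. apply sig_eq; simpl.
  apply functional_extensionality; intros x; apply propositional_extensionality;
    split; intros; eauto.
Qed.
Lemma rep_cls t : R (rep (cls t)) t.
Proof. apply cls_eq_R. rewrite cls_rep. reflexivity. Qed.
End Quot.
Arguments cls {T R} t.
Arguments rep {T R} q.
Arguments cls_surj {T R} q.
Arguments cls_rep {T R} q.
Arguments cls_eq_R {T R}.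
Arguments rep_cls {T R}.
Arguments R_cls_eq {T R}.

Lemma bd_id m (x : pd m) : pd_bd (pd_id x) = x.
Proof.
  induction m; simpl.
  - destruct x; reflexivity.
  - induction x; simpl; [reflexivity|]. rewrite IHm, IHx. reflexivity.
Qed.

Section Free.
Variable n : nat.
Variable K : coll n.

Inductive tm : nat -> Type :=
| inj : forall m, cell (carrier K) m -> tm m
| gm : forall m, tm m -> tm m -> tm (S m).

Definition tsrc {m} (t : tm (S m)) : tm m :=
  match t in tm k return match k return Type with 0 => unit | S j => tm j end with
  | inj k x => match k return cell (carrier K) k -> match k return Type with 0 => unit | S j => tm j end
               with 0 => fun _ => tt | S j => fun x => inj _ (src _ x) end x
  | gm k a b => a
  end.
Definition ttgt {m} (t : tm (S m)) : tm m :=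
  match t in tm k return match k return Type with 0 => unit | S j => tm j end with
  | inj k x => match k return cell (carrier K) k -> match k return Type with 0 => unit | S j => tm j end
               with 0 => fun _ => tt | S j => fun x => inj _ (tgt _ x) end x
  | gm k a b => b
  end.

Fixpoint tar {m} (t : tm m) : pd m :=
  match t with
  | inj k x => arity K x
  | gm k a b => pd_id (tar a)
  end.

Definition tpar (m : nat) : tm m -> tm m -> Prop :=
  match m return tm m -> tm m -> Prop with
  | 0 => fun _ _ => True
  | S j => fun a b => tsrc a = tsrc b /\ ttgt a = ttgt b
  end.

Fixpoint wf {m} (t : tm m) : Prop :=
  match t with
  | inj k x => True
  | gm k a b => wf a /\ wf b /\ tar a = tar b /\ tpar k a b /\ S k <= n
  end.

Lemma wf_src m (t : tm (S m)) : wf t -> wf (tsrc t) /\ wf (ttgt t).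
Proof. dependent destruction t; simpl; intuition. Qed.

Lemma tar_src m (t : tm (S m)) : wf t ->
  tar (tsrc t) = pd_bd (tar t) /\ tar (ttgt t) = pd_bd (tar t).
Proof.
  dependent destruction t; simpl; intros W.
  - split; [apply arity_src | apply arity_tgt].
  - rewrite bd_id. destruct W as (_ & _ & E & _). split; [reflexivity|]. symmetry; exact E.
Qed.

Lemma tglob m (t : tm (S (S m))) : wf t ->
  tsrc (tsrc t) = tsrc (ttgt t) /\ ttgt (tsrc t) = ttgt (ttgt t).
Proof.
  dependent destruction t; simpl; intros W.
  - rewrite glob_ss, glob_ts. split; reflexivity.
  - destruct W as (_ & _ & _ & P & _). exact P.
Qed.

Arguments wf_src {m t}.
Arguments tar_src {m t}.
Arguments tglob {m t}.

Definition Rt m (t u : tm m) : Prop := t = u \/ (m = n /\ tpar m t u /\ tar t = tar u).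
Arguments Rt {m} t u.

Lemma tpar_refl m (t : tm m) : tpar m t t.
Proof. destruct m; simpl; auto. Qed.
Lemma tpar_sym m (t u : tm m) : tpar m t u -> tpar m u t.
Proof. destruct m; simpl; auto. intros [A B]; auto. Qed.
Lemma tpar_trans m (t u v : tm m) : tpar m t u -> tpar m u v -> tpar m t v.
Proof. destruct m; simpl; auto. intros [A B] [C D]; split; congruence. Qed.

Lemma Rt_src m (t u : tm (S m)) : Rt t u -> tsrc t = tsrc u /\ ttgt t = ttgt u.
Proof. intros [E|(_ & P & _)]; [subst; auto | exact P]. Qed.
Lemma Rt_tar m (t u : tm m) : Rt t u -> tar t = tar u.
Proof. intros [E|(_ & _ & P)]; [subst; auto | exact P]. Qed.
Arguments Rt_src {m t u}.
Arguments Rt_tar {m t u}.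
Lemma Rt_lt m (t u : tm m) : m < n -> Rt t u -> t = u.
Proof. intros H [E|(E & _)]; [exact E | lia]. Qed.

Definition ST m := {t : tm m | wf t /\ m <= n}.
Definition RS m (x y : ST m) : Prop := Rt (proj1_sig x) (proj1_sig y).
Arguments RS {m} x y.
Lemma RS_refl m (x : ST m) : RS x x.
Proof. left; reflexivity. Qed.
Lemma RS_sym m (x y : ST m) : RS x y -> RS y x.
Proof.
  unfold RS, Rt. intros [E|(A&B&C)]; [left; auto | right; auto using tpar_sym].
Qed.
Lemma RS_trans m (x y z : ST m) : RS x y -> RS y z -> RS x z.
Proof.
  unfold RS, Rt. intros [E|(A&B&C)] [E'|(A'&B'&C')].
  - left; congruence.
  - rewrite E; right; auto.
  - rewrite <- E'; right; auto.
  - right; split; auto; split; [eapply tpar_trans; eauto | congruence].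
Qed.

Lemma le_Sn_le a b : S a <= b -> a <= b.
Proof. lia. Qed.

Definition FC m := @Q (ST m) (@RS m).
Definition fcls {m} (t : tm m) (w : wf t /\ m <= n) : FC m := cls (exist _ t w).

Lemma fcls_irr m (t u : tm m) w w' : t = u -> fcls t w = fcls u w'.
Proof. intros; subst. f_equal. apply proof_irrelevance. Qed.

Arguments fcls_irr {m t u} w w' _.
Lemma fcls_surj m (q : FC m) : exists t w, q = @fcls m t w.
Proof.
  destruct (cls_surj q) as [[t w] E]. exists t, w. exact E.
Qed.

Arguments fcls_surj {m} q.

Lemma fcls_R m t u w w' : @fcls m t w = fcls u w' -> Rt t u.
Proof. intros E. apply (cls_eq_R (@RS_refl m)) in E. exact E. Qed.
Lemma fcls_lt m t u w w' : m < n -> @fcls m t w = fcls u w' -> t = u.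
Proof. intros H E. eapply Rt_lt; eauto using fcls_R. Qed.

Definition rt {m} (q : FC m) : tm m := proj1_sig (rep q).
Lemma rt_wf {m} (q : FC m) : wf (rt q) /\ m <= n.
Proof. exact (proj2_sig (rep q)). Qed.
Lemma rt_fcls m t w : Rt (rt (@fcls m t w)) t.
Proof. exact (rep_cls (@RS_refl m) (exist _ t w)). Qed.
Arguments rt_fcls {m t} w.

Lemma fcls_rt m (q : FC m) : fcls (rt q) (rt_wf q) = q.
Proof.
  unfold fcls. transitivity (@cls _ (@RS m) (rep q)); [f_equal; apply sig_eq; reflexivity | apply cls_rep].
Qed.

Arguments fcls_rt {m} q.
Definition fsrc m (q : FC (S m)) : FC m :=
  fcls (tsrc (rt q)) (conj (proj1 (wf_src (proj1 (rt_wf q))))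
                           (le_Sn_le _ _ (proj2 (rt_wf q)))).
Definition ftgt m (q : FC (S m)) : FC m :=
  fcls (ttgt (rt q)) (conj (proj2 (wf_src (proj1 (rt_wf q))))
                           (le_Sn_le _ _ (proj2 (rt_wf q)))).

Arguments fsrc {m} q.
Arguments ftgt {m} q.

Lemma fsrc_cls m t w w' : fsrc (@fcls (S m) t w) = fcls (tsrc t) w'.
Proof. unfold fsrc. apply fcls_irr. apply (proj1 (Rt_src (rt_fcls w))). Qed.
Lemma ftgt_cls m t w w' : ftgt (@fcls (S m) t w) = fcls (ttgt t) w'.
Proof. unfold ftgt. apply fcls_irr. apply (proj2 (Rt_src (rt_fcls w))). Qed.

Arguments fsrc_cls {m t} w w'.
Arguments ftgt_cls {m t} w w'.

Lemma fglob_ss m (q : FC (S (S m))) : fsrc (fsrc q) = fsrc (ftgt q).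
Proof.
  destruct (fcls_surj q) as (t & w & ->).
  destruct w as [w1 w2].
  destruct (wf_src w1) as [ws wt].
  rewrite (fsrc_cls (conj w1 w2) (conj ws (le_Sn_le _ _ w2))).
  rewrite (ftgt_cls (conj w1 w2) (conj wt (le_Sn_le _ _ w2))).
  destruct (wf_src ws) as [wss _]. destruct (wf_src wt) as [wts _].
  rewrite (fsrc_cls _ (conj wss (le_Sn_le _ _ (le_Sn_le _ _ w2)))).
  rewrite (fsrc_cls _ (conj wts (le_Sn_le _ _ (le_Sn_le _ _ w2)))).
  apply fcls_irr. apply (tglob w1).
Qed.
Lemma fglob_ts m (q : FC (S (S m))) : ftgt (fsrc q) = ftgt (ftgt q).
Proof.
  destruct (fcls_surj q) as (t & w & ->).
  destruct w as [w1 w2].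
  destruct (wf_src w1) as [ws wt].
  rewrite (fsrc_cls (conj w1 w2) (conj ws (le_Sn_le _ _ w2))).
  rewrite (ftgt_cls (conj w1 w2) (conj wt (le_Sn_le _ _ w2))).
  destruct (wf_src ws) as [_ wss]. destruct (wf_src wt) as [_ wts].
  rewrite (ftgt_cls _ (conj wss (le_Sn_le _ _ (le_Sn_le _ _ w2)))).
  rewrite (ftgt_cls _ (conj wts (le_Sn_le _ _ (le_Sn_le _ _ w2)))).
  apply fcls_irr. apply (tglob w1).
Qed.

Lemma ftrunc m : n < m -> FC m -> False.
Proof. intros H q. pose proof (proj2 (rt_wf q)). lia. Qed.

Definition FG : gset n := @GSet n FC (@fsrc) (@ftgt) fglob_ss fglob_ts ftrunc.


Lemma Rt_fcls m t u w w' : Rt t u -> @fcls m t w = fcls u w'.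
Proof.
  intros H. unfold fcls. apply (R_cls_eq (@RS_sym m) (@RS_trans m)). exact H.
Qed.

Definition farity m (q : FC m) : pd m := tar (rt q).
Arguments farity {m} q.
Lemma farity_cls m t w : farity (@fcls m t w) = tar t.
Proof. unfold farity. apply Rt_tar. apply rt_fcls. Qed.

Lemma farity_src m (q : FC (S m)) : farity (fsrc q) = pd_bd (farity q).
Proof.
  destruct (fcls_surj q) as (t & [w1 w2] & ->).
  rewrite (fsrc_cls _ (conj (proj1 (wf_src w1)) (le_Sn_le _ _ w2))).
  rewrite !farity_cls. apply (tar_src w1).
Qed.
Lemma farity_tgt m (q : FC (S m)) : farity (ftgt q) = pd_bd (farity q).
Proof.
  destruct (fcls_surj q) as (t & [w1 w2] & ->).
  rewrite (ftgt_cls _ (conj (proj2 (wf_src w1)) (le_Sn_le _ _ w2))).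
  rewrite !farity_cls. apply (tar_src w1).
Qed.

Definition FK : coll n := @Coll n FG (@farity) farity_src farity_tgt.

Arguments farity_cls {m t} w.
Lemma par_tpar m (a b : FC m) : par FG m a b -> tpar m (rt a) (rt b).
Proof.
  destruct m; simpl; [trivial|]. intros [E1 E2].
  pose proof (proj2 (rt_wf a)).
  unfold fsrc, ftgt in *. split; eapply fcls_lt; eauto; lia.
Qed.

Lemma fgam_wf m al (h : S m <= n) (a b : FC m) (ha : farity a = al)
  (hb : farity b = al) (hab : par FG m a b) : wf (gm _ (rt a) (rt b)) /\ S m <= n.
Proof.
  simpl. unfold farity in *. pose proof (proj1 (rt_wf a)). pose proof (proj1 (rt_wf b)).
  repeat split; auto using par_tpar. congruence.
Qed.

Arguments fgam_wf {m al} h {a b} ha hb hab.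
Definition fgam m al (h : S m <= n) (a b : FC m) (ha : farity a = al)
  (hb : farity b = al) (hab : par FG m a b) : FC (S m) :=
  fcls (gm _ (rt a) (rt b)) (fgam_wf h ha hb hab).

Lemma fgam_ar m al h a b ha hb hab : farity (@fgam m al h a b ha hb hab) = pd_id al.
Proof. unfold fgam. rewrite farity_cls. simpl. unfold farity in ha. congruence. Qed.
Lemma fgam_src m al h a b ha hb hab : fsrc (@fgam m al h a b ha hb hab) = a.
Proof.
  unfold fgam. rewrite (@fsrc_cls _ (gm _ (rt a) (rt b)) _ (rt_wf a)). apply fcls_rt.
Qed.
Lemma fgam_tgt m al h a b ha hb hab : ftgt (@fgam m al h a b ha hb hab) = b.
Proof.
  unfold fgam. rewrite (@ftgt_cls _ (gm _ (rt a) (rt b)) _ (rt_wf b)). apply fcls_rt.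
Qed.
Lemma ftame (a b : FC n) : par FG n a b -> farity a = farity b -> a = b.
Proof.
  intros P E. rewrite <- (fcls_rt a), <- (fcls_rt b). apply Rt_fcls.
  right. split; [reflexivity|]. split; [apply par_tpar; exact P | exact E].
Qed.

Definition fcontr : contraction FK :=
  @Contraction n FK fgam fgam_ar fgam_src fgam_tgt ftame.
Definition FreeC : contr n := @Contr n FK fcontr.

Lemma cell_le m (x : cell (carrier K) m) : m <= n.
Proof. destruct (Compare_dec.le_gt_dec m n); auto. exfalso; eapply trunc; eauto. Qed.

Arguments cell_le {m} x.
Definition eta_f m (x : cell (carrier K) m) : FC m := fcls (inj m x) (conj I (cell_le x)).

Definition etaK : cmap K FK.
Proof.
  refine (@CMap n K FK eta_f _ _ _); intros; unfold eta_f; simpl.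
  - rewrite (@fsrc_cls _ (inj _ x) _ (conj I (cell_le (src _ x)))). reflexivity.
  - rewrite (@ftgt_cls _ (inj _ x) _ (conj I (cell_le (tgt _ x)))). reflexivity.
  - rewrite farity_cls. reflexivity.
Defined.

Lemma gam_irr (L : coll n) (c : contraction L) m al al' h h' a a' b b' ha hb hab ha' hb' hab' :
  al = al' -> a = a' -> b = b' ->
  @gam _ _ c m al h a b ha hb hab = @gam _ _ c m al' h' a' b' ha' hb' hab'.
Proof. intros; subst. f_equal; apply proof_irrelevance. Qed.

Lemma cmap_par (L L' : coll n) (g : cmap L L') m (a b : cell (carrier L) m) :
  par (carrier L) m a b -> par (carrier L') m (cm g a) (cm g b).
Proof.
  destruct m; simpl; auto. intros [E1 E2]. rewrite <- !cm_src, <- !cm_tgt, E1, E2. auto.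
Qed.

Section Eval.
Variable A : contr n.
Variable f : cmap K (ccoll A).
Local Notation C := (carrier (ccoll A)).

Fixpoint ev {m} (t : tm m) : option (cell C m) :=
  match t with
  | inj k x => Some (cm f x)
  | gm k a b =>
    match ev a, ev b with
    | Some x, Some y =>
      match excluded_middle_informative
              (S k <= n /\ arity (ccoll A) y = arity (ccoll A) x /\ par C k x y) with
      | left H => Some (@gam _ _ (ccon A) k (arity _ x) (proj1 H) x y eq_refl
                          (proj1 (proj2 H)) (proj2 (proj2 H)))
      | right _ => None
      end
    | _, _ => None
    end
  end.

Lemma ev_ar m (t : tm m) x : ev t = Some x -> arity (ccoll A) x = tar t.
Proof.
  revert x; induction t; simpl; intros.
  - injection H; intros <-. apply cm_ar.
  - destruct (ev t1) as [x1|] eqn:E1; [|discriminate].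
    destruct (ev t2) as [x2|] eqn:E2; [|discriminate].
    destruct excluded_middle_informative; [|discriminate].
    injection H; intros <-. rewrite gam_ar. rewrite (IHt1 _ eq_refl). reflexivity.
Qed.

Lemma ev_src m (t : tm (S m)) x : ev t = Some x ->
  ev (tsrc t) = Some (src C x) /\ ev (ttgt t) = Some (tgt C x).
Proof.
  dependent destruction t; simpl; intros.
  - injection H; intros <-. rewrite cm_src, cm_tgt. auto.
  - destruct (ev t1) as [x1|] eqn:E1; [|discriminate].
    destruct (ev t2) as [x2|] eqn:E2; [|discriminate].
    destruct excluded_middle_informative; [|discriminate].
    injection H; intros <-. rewrite gam_src, gam_tgt. auto.
Qed.

Arguments ev_src {m t x} _.
Arguments ev_ar {m t x} _.
Lemma ev_par m (a b : tm m) xa xb : ev a = Some xa -> ev b = Some xb ->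
  tpar m a b -> par C m xa xb.
Proof.
  destruct m; simpl; auto. intros Ea Eb [P1 P2].
  destruct (ev_src Ea) as [Sa Ta]. destruct (ev_src Eb) as [Sb Tb].
  rewrite P1 in Sa. rewrite P2 in Ta. split; congruence.
Qed.

Lemma ev_some m (t : tm m) : wf t -> exists x, ev t = Some x.
Proof.
  induction t; simpl; intros W; eauto.
  destruct W as (W1 & W2 & E & P & L).
  destruct (IHt1 W1) as [x1 E1]. destruct (IHt2 W2) as [x2 E2].
  rewrite E1, E2. destruct excluded_middle_informative as [H|H]; eauto.
  exfalso; apply H. split; [exact L|]. split.
  - rewrite (ev_ar E1), (ev_ar E2). congruence.
  - eapply ev_par; eauto.
Qed.

Arguments ev_some {m t} _.
Lemma ev_gm m (a b : tm m) xa xb al h ha hb hab :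
  ev a = Some xa -> ev b = Some xb ->
  ev (gm _ a b) = Some (@gam _ _ (ccon A) m al h xa xb ha hb hab).
Proof.
  intros Ea Eb. simpl. rewrite Ea, Eb.
  destruct excluded_middle_informative as [H|H].
  - f_equal. apply gam_irr; auto.
  - exfalso; apply H. split; [exact h|]. split; [congruence | exact hab].
Qed.

Definition fsh_f m (q : FC m) : cell C m :=
  proj1_sig (constructive_indefinite_description _ (ev_some (proj1 (rt_wf q)))).
Arguments fsh_f {m} q.
Lemma fsh_spec m (q : FC m) : ev (rt q) = Some (fsh_f q).
Proof. unfold fsh_f. destruct constructive_indefinite_description; auto. Qed.

Arguments fsh_spec {m} q.
Lemma fsh_cls m (t : tm m) w x : ev t = Some x -> fsh_f (fcls t w) = x.
Proof.
  intros E. pose proof (fsh_spec (fcls t w)) as S1.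
  destruct (rt_fcls w) as [E'|(En & P & T)].
  - rewrite E' in S1. congruence.
  - subst m. apply (tame (ccon A)).
    + eapply ev_par; eauto.
    + rewrite (ev_ar S1), (ev_ar E). exact T.
Qed.

Arguments fsh_cls {m t} w {x} _.
Lemma fsh_ev m (t : tm m) w : ev t = Some (fsh_f (fcls t w)).
Proof.
  destruct (ev_some (proj1 w)) as [x E]. rewrite (fsh_cls w E). exact E.
Qed.

Arguments fsh_ev {m t} w.
Definition fsh_cm : cmap FK (ccoll A).
Proof.
  refine (@CMap n FK (ccoll A) (@fsh_f) _ _ _); simpl; intros.
  - destruct (fcls_surj x) as (t & [w1 w2] & ->).
    rewrite (fsrc_cls _ (conj (proj1 (wf_src w1)) (le_Sn_le _ _ w2))).
    apply fsh_cls. apply (ev_src (fsh_ev (conj w1 w2))).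
  - destruct (fcls_surj x) as (t & [w1 w2] & ->).
    rewrite (ftgt_cls _ (conj (proj2 (wf_src w1)) (le_Sn_le _ _ w2))).
    apply fsh_cls. apply (ev_src (fsh_ev (conj w1 w2))).
  - apply ev_ar. apply fsh_spec.
Defined.

Definition fsh : contr_map FreeC A.
Proof.
  refine (@ContrMap n FreeC A fsh_cm _); simpl; intros.
  unfold fgam. apply fsh_cls. apply ev_gm; apply fsh_spec.
Defined.

Lemma fsh_eta m (x : cell (carrier K) m) : cm (ucm fsh) (cm etaK x) = cm f x.
Proof. simpl. apply fsh_cls. reflexivity. Qed.

End Eval.

Lemma tpar_par m (a b : tm m) wa wb : tpar m a b -> par FG m (fcls a wa) (fcls b wb).
Proof.
  destruct m; simpl; auto. intros [P1 P2].
  destruct wa as [wa1 wa2]. destruct wb as [wb1 wb2].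
  rewrite (fsrc_cls _ (conj (proj1 (wf_src wa1)) (le_Sn_le _ _ wa2))).
  rewrite (fsrc_cls _ (conj (proj1 (wf_src wb1)) (le_Sn_le _ _ wb2))).
  rewrite (ftgt_cls _ (conj (proj2 (wf_src wa1)) (le_Sn_le _ _ wa2))).
  rewrite (ftgt_cls _ (conj (proj2 (wf_src wb1)) (le_Sn_le _ _ wb2))).
  split; apply fcls_irr; auto.
Qed.

Arguments tpar_par {m a b} wa wb _.
Lemma free_uniq (A : contr n) (g g' : contr_map FreeC A) :
  (forall m x, cm (ucm g) (cm etaK x) = cm (ucm g') (@cm _ _ _ etaK m x)) -> g = g'.
Proof.
  intros H. apply contr_map_eq, cmap_eq.
  apply functional_extensionality_dep; intros m.
  apply functional_extensionality; intros q.
  destruct (fcls_surj q) as (t & w & ->).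
  induction t.
  - specialize (H m c). simpl in H. unfold eta_f in H.
    rewrite (@fcls_irr _ (inj m c) (inj m c) (conj I (cell_le c)) w eq_refl) in H. exact H.
  - pose proof w as w0. destruct w0 as [[wa [wb [Et [P L]]]] L'].
    assert (wa' : wf t1 /\ m <= n) by (split; [exact wa | lia]).
    assert (wb' : wf t2 /\ m <= n) by (split; [exact wb | lia]).
    assert (ha : farity (fcls t1 wa') = tar t1) by apply farity_cls.
    assert (hb : farity (fcls t2 wb') = tar t1) by (rewrite farity_cls; congruence).
    pose proof (tpar_par wa' wb' P) as hab.
    assert (E : fcls (gm _ t1 t2) w
                = @fgam m (tar t1) L _ _ ha hb hab).
    { unfold fgam. apply fcls_irr. f_equal; symmetry; apply Rt_lt; try lia; apply rt_fcls. }
    rewrite E.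
    assert (ha' : forall (g0 : contr_map FreeC A),
               arity (ccoll A) (cm (ucm g0) (fcls t1 wa')) = tar t1)
      by (intros; rewrite cm_ar; exact ha).
    assert (hb' : forall (g0 : contr_map FreeC A),
               arity (ccoll A) (cm (ucm g0) (fcls t2 wb')) = tar t1)
      by (intros; rewrite cm_ar; exact hb).
    pose proof (fun g0 : contr_map FreeC A => @cmap_par _ _ (ucm g0) _ _ _ hab) as hab'.
    rewrite (@ucm_gam _ _ _ g _ _ _ _ _ _ _ _ (ha' g) (hb' g) (hab' g)).
    rewrite (@ucm_gam _ _ _ g' _ _ _ _ _ _ _ _ (ha' g') (hb' g') (hab' g')).
    apply gam_irr; auto.
Qed.

End Free.

Lemma fsh_f_eta n K A f m x : fsh_f n K A f m (eta_f n K m x) = cm f x.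
Proof. apply (fsh_eta n K A f m x). Qed.

Ltac fsimp := repeat (progress (simpl; rewrite ?fsh_f_eta)); try reflexivity.

Definition Ffun (n : nat) : Functor (Coll_cat n) (Contr_cat n).
Proof.
  refine (@Build_Functor (Coll_cat n) (Contr_cat n) (FreeC n)
            (fun K K' h => fsh n K (FreeC n K') (cmap_comp (etaK n K') h)) _ _).
  - intros K. apply free_uniq. intros m x. fsimp.
  - intros a b c f g. apply free_uniq. intros m x. simpl.
    fsimp.
Defined.

Lemma cmap_ext n (K K' : coll n) (f g : cmap K K') :
  (forall m x, @cm _ _ _ f m x = cm g x) -> f = g.
Proof.
  intros H. apply cmap_eq. apply functional_extensionality_dep; intros m.
  apply functional_extensionality; intros x. apply H.
Qed.

Lemma fgam_irr n (K : coll n) m al al' h h' a a' b b' ha hb hab ha' hb' hab' :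
  al = al' -> a = a' -> b = b' ->
  fgam n K m al h a b ha hb hab = fgam n K m al' h' a' b' ha' hb' hab'.
Proof. intros; subst. f_equal; apply proof_irrelevance. Qed.

Definition epsC n (A : contr n) : contr_map (FreeC n (ccoll A)) A :=
  fsh n (ccoll A) A (cmap_id _).

Arguments epsC {n} A.

Lemma gam_via_eps n (A : contr n) m al h a b ha hb hab ha' hb' hab' :
  @gam _ _ (ccon A) m al h a b ha hb hab =
  cm (ucm (epsC A)) (fgam n (ccoll A) m al h (cm (etaK n _) a) (cm (etaK n _) b) ha' hb' hab').
Proof.
  symmetry.
  pose proof (@ucm_gam _ _ _ (epsC A) m al h _ _ ha' hb' hab'
             (eq_trans (cm_ar (ucm (epsC A)) _) ha') (eq_trans (cm_ar (ucm (epsC A)) _) hb')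
             (cmap_par _ _ _ (ucm (epsC A)) _ _ _ hab')) as U.
  cbn [ccon FreeC fcontr gam] in U. rewrite U.
  apply gam_irr; auto; unfold epsC; rewrite fsh_eta; reflexivity.
Qed.

Arguments gam_via_eps {n} A m al h a b ha hb hab ha' hb' hab'.

Lemma ff n (A B : contr n) (f : cmap (ccoll A) (ccoll B)) :
  cmap_comp f (ucm (epsC A)) =
  cmap_comp (ucm (epsC B)) (ucm (fsh n (ccoll A) (FreeC n (ccoll B)) (cmap_comp (etaK n _) f))) ->
  exists! g : contr_map A B, ucm g = f.
Proof.
  intros H.
  set (Ff := fsh n (ccoll A) (FreeC n (ccoll B)) (cmap_comp (etaK n _) f)).
  assert (Hpt : forall m z, cm f (cm (ucm (epsC A)) z) = cm (ucm (epsC B)) (@cm _ _ _ (ucm Ff) m z)).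
  { intros m z. exact (f_equal (fun k => @cm _ _ _ k m z) H). }
  assert (P : forall m al h a b ha hb hab ha' hb' hab',
             cm f (@gam _ _ (ccon A) m al h a b ha hb hab)
             = @gam _ _ (ccon B) m al h (cm f a) (cm f b) ha' hb' hab').
  { intros.
    pose proof (eq_trans (cm_ar (etaK n (ccoll A)) a) ha) as hA1.
    pose proof (eq_trans (cm_ar (etaK n (ccoll A)) b) hb) as hA2.
    pose proof (cmap_par _ _ _ (etaK n (ccoll A)) _ _ _ hab) as hA3.
    pose proof (eq_trans (cm_ar (etaK n (ccoll B)) (cm f a)) ha') as hB1.
    pose proof (eq_trans (cm_ar (etaK n (ccoll B)) (cm f b)) hb') as hB2.
    pose proof (cmap_par _ _ _ (etaK n (ccoll B)) _ _ _ hab') as hB3.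
    rewrite (gam_via_eps A m al h a b ha hb hab hA1 hA2 hA3).
    rewrite Hpt.
    pose proof (@ucm_gam _ _ _ Ff m al h _ _ hA1 hA2 hA3
               (eq_trans (cm_ar (ucm Ff) _) hA1) (eq_trans (cm_ar (ucm Ff) _) hA2)
               (cmap_par _ _ _ (ucm Ff) _ _ _ hA3)) as U.
    cbn [ccon FreeC fcontr gam] in U. rewrite U.
    rewrite (gam_via_eps B m al h (cm f a) (cm f b) ha' hb' hab' hB1 hB2 hB3).
    f_equal. apply fgam_irr; auto; unfold Ff; rewrite fsh_eta; reflexivity. }
  exists (@ContrMap n A B f P). split; [reflexivity|].
  intros g' E. apply contr_map_eq. simpl. symmetry; exact E.
Qed.

Section ES.
Variable n : nat.
Variable X : coll n.
Variable h : cmap (FK n X) X.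
Hypothesis Hu : forall m x, cm h (@cm _ _ _ (etaK n X) m x) = x.

Definition gamX m al (hle : S m <= n) (a b : cell (carrier X) m)
  (ha : arity X a = al) (hb : arity X b = al) (hab : par (carrier X) m a b)
  : cell (carrier X) (S m) :=
  cm h (fgam n X m al hle (cm (etaK n X) a) (cm (etaK n X) b)
          (eq_trans (cm_ar (etaK n X) a) ha) (eq_trans (cm_ar (etaK n X) b) hb)
          (cmap_par _ _ _ (etaK n X) _ _ _ hab)).

Lemma gamX_ar m al hle a b ha hb hab : arity X (@gamX m al hle a b ha hb hab) = pd_id al.
Proof. unfold gamX. rewrite (cm_ar h). apply fgam_ar. Qed.
Lemma gamX_src m al hle a b ha hb hab : src (carrier X) (@gamX m al hle a b ha hb hab) = a.
Proof. unfold gamX. rewrite <- (cm_src h). transitivity (cm h (cm (etaK n X) a)); [f_equal; apply fgam_src | apply Hu]. Qed.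
Lemma gamX_tgt m al hle a b ha hb hab : tgt (carrier X) (@gamX m al hle a b ha hb hab) = b.
Proof. unfold gamX. rewrite <- (cm_tgt h). transitivity (cm h (cm (etaK n X) b)); [f_equal; apply fgam_tgt | apply Hu]. Qed.
Lemma tameX (a b : cell (carrier X) n) : par (carrier X) n a b -> arity X a = arity X b -> a = b.
Proof.
  intros P E. rewrite <- (Hu _ a), <- (Hu _ b). f_equal. apply ftame.
  - apply (cmap_par _ _ _ (etaK n X) _ _ _ P).
  - change (arity (FK n X) (cm (etaK n X) a) = arity (FK n X) (cm (etaK n X) b)).
    rewrite !cm_ar. exact E.
Qed.

Definition conX : contraction X := @Contraction n X gamX gamX_ar gamX_src gamX_tgt tameX.
Definition AX : contr n := @Contr n X conX.
End ES.

Lemma es n (X : coll n) (h : cmap (FK n X) X) :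
  cmap_comp h (etaK n X) = cmap_id X ->
  cmap_comp h (ucm (fsh n (FK n X) (FreeC n X) (cmap_comp (etaK n X) h))) =
  cmap_comp h (ucm (epsC (FreeC n X))) ->
  exists (A : contr n) (phi : cmap (ccoll A) X) (psi : cmap X (ccoll A)),
    cmap_comp phi psi = cmap_id X /\ cmap_comp psi phi = cmap_id (ccoll A) /\
    cmap_comp phi (ucm (epsC A)) =
    cmap_comp h (ucm (fsh n (ccoll A) (FreeC n X) (cmap_comp (etaK n X) phi))).
Proof.
  intros H1 H2.
  assert (Hu : forall m x, cm h (@cm _ _ _ (etaK n X) m x) = x).
  { intros m x. exact (f_equal (fun k => @cm _ _ _ k m x) H1). }
  set (Fh := fsh n (FK n X) (FreeC n X) (cmap_comp (etaK n X) h)).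
  assert (Hpt : forall m z, cm h (@cm _ _ _ (ucm Fh) m z) = cm h (cm (ucm (epsC (FreeC n X))) z)).
  { intros m z. exact (f_equal (fun k => @cm _ _ _ k m z) H2). }
  set (A := AX n X h Hu).
  assert (P : forall m al hle a b ha hb hab ha' hb' hab',
             cm h (@gam _ _ (ccon (FreeC n X)) m al hle a b ha hb hab)
             = @gam _ _ (ccon A) m al hle (cm h a) (cm h b) ha' hb' hab').
  { intros.
    pose proof (eq_trans (cm_ar (etaK n (FK n X)) a) ha) as hA1.
    pose proof (eq_trans (cm_ar (etaK n (FK n X)) b) hb) as hA2.
    pose proof (cmap_par _ _ _ (etaK n (FK n X)) _ _ _ hab) as hA3.
    rewrite (gam_via_eps (FreeC n X) m al hle a b ha hb hab hA1 hA2 hA3).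
    rewrite <- Hpt.
    pose proof (@ucm_gam _ _ _ Fh m al hle _ _ hA1 hA2 hA3
               (eq_trans (cm_ar (ucm Fh) _) hA1) (eq_trans (cm_ar (ucm Fh) _) hA2)
               (cmap_par _ _ _ (ucm Fh) _ _ _ hA3)) as U.
    cbn [ccon FreeC fcontr gam] in U. etransitivity; [apply f_equal; exact U|].
    simpl. unfold gamX. f_equal.
    apply fgam_irr; auto; rewrite fsh_f_eta; reflexivity. }
  set (hc := @ContrMap n (FreeC n X) A h P).
  exists A, (cmap_id X), (cmap_id X).
  split; [apply cmap_ext; reflexivity|]. split; [apply cmap_ext; reflexivity|].
  assert (E : epsC A = contr_map_comp hc (fsh n (ccoll A) (FreeC n X) (cmap_comp (etaK n X) (cmap_id X)))).
  { apply free_uniq. intros m x. unfold epsC. rewrite fsh_eta. simpl.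
    rewrite fsh_f_eta. simpl. symmetry; apply Hu. }
  apply cmap_ext; intros m y.
  change (cm (ucm (epsC A)) y = cm (ucm (contr_map_comp hc (fsh n (ccoll A) (FreeC n X) (cmap_comp (etaK n X) (cmap_id X))))) y).
  rewrite <- E. reflexivity.
Qed.

Theorem mainTheorem1 (n : nat) : monadic (V n).
Proof.
  exists (Ffun n), (fun X => etaK n X), (fun A => fsh n (ccoll A) A (cmap_id _)).
  split; [|split; [|split; [|split; [|split]]]].
  - intros X Y f. apply cmap_ext; intros m x. fsimp.
  - intros A B g. apply free_uniq. intros m x. fsimp.
  - intros X. apply free_uniq. intros m x. fsimp.
  - intros A. apply cmap_ext; intros m x. fsimp.
  - intros A B f H. apply ff. exact H.
  - intros X h H1 H2. apply es; assumption.
Qed.
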